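(* Let $q\ge 2$ be an integer and let $\delta,\gamma\ge 0$ satisfy $\frac{\delta}{1-\frac1q}+\frac{\gamma}{q-1}\ge 1$. Then there is no infinite family of $q$-ary codes with rate bounded away from zero (block length $n\to\infty$) that is list-decodable, with list size $2^{o(n)}$, from $\delta n$ deletions and $\gamma n$ insertions.
   Context: A $q$-ary code of block length $n$ is a set $C\subseteq\Sigma^n$ with $|\Sigma|=q$; its rate is $\log_q|C|/n$. A string $y$ is obtained from $x$ by $D$ deletions and $I$ insertions if $y$ results from $x$ by deleting $D$ symbols and inserting $I$ symbols (at arbitrary positions, with arbitrary values). A code $C$ is $L$-list decodable from $\delta n$ deletions and $\gamma n$ insertions if for every string $y$ over $\Sigma$, at most $L$ codewords $x\in C$ are such that $y$ can be obtained from $x$ by at most $\delta n$ deletions and at most $\gamma n$ insertions. *)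

(* Defs.v *)
From mathcomp Require Import all_boot.
From Stdlib Require Import Reals.

Set Implicit Arguments.
Unset Strict Implicit.
Unset Printing Implicit Defensive.

(* y results from x by deleting exactly D symbols and inserting exactly I
   symbols: first delete D symbols of x (obtaining a subsequence z of x with
   size z + D = size x), then insert I symbols into z (so z is a subsequence
   of y with size y = size z + I). *)
Definition del_ins (T : eqType) (D I : nat) (x y : seq T) : Prop :=
  exists z : seq T,
    [&& subseq z x, size z + D == size x, subseq z y & size y == size z + I].

Definition reachable (T : eqType) (d g : R) (n : nat) (x y : seq T) : Prop :=
  exists D I : nat,
    (INR D <= d * INR n)%R /\ (INR I <= g * INR n)%R /\ del_ins D I x y.

Notation code q n := {set n.-tuple 'I_q}.

Definition rate (q n : nat) (C : code q n) : R :=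
  (ln (INR #|C|) / ln (INR q) / INR n)%R.

Definition list_decodable (q n : nat) (C : code q n) (L : nat) (d g : R) : Prop :=
  forall y : seq 'I_q,
  forall S : {set n.-tuple 'I_q},
    S \subset C ->
    (forall x : n.-tuple 'I_q, x \in S -> reachable d g n (tval x) y) ->
    #|S| <= L.

(* Main.v *)
Require Import Defs.
From mathcomp Require Import all_boot.
From Stdlib Require Import Reals Lra Lia Classical.
From mathcomp Require Import zify.

Lemma sum_count_ord (q : nat) (s : seq 'I_q) :
  \sum_(a < q) count_mem a s = size s.
Proof.
elim: s => [|x s IH] /=; first by rewrite big1.
rewrite big_split /= IH (bigD1 x) //= eqxx big1 ?addn0 ?add1n //.
by move=> i /negbTE; rewrite eq_sym => ->.
Qed.

Lemma most_frequent (q : nat) (s : seq 'I_q) : 0 < q ->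
  exists a : 'I_q, size s <= q * count_mem a s.
Proof.
move=> q0.
case: (classic (exists a : 'I_q, size s <= q * count_mem a s)) => // H.
exfalso.
have Hall : forall a : 'I_q, q * count_mem a s <= (size s).-1.
  move=> a; case: (leqP (size s) (q * count_mem a s)) => h.
    by case: H; exists a.
  lia.
have : \sum_(a < q) q * count_mem a s <= \sum_(a < q) (size s).-1 by apply: leq_sum => a _; apply: Hall.
rewrite -big_distrr /= sum_count_ord sum_nat_const card_ord.
case: (posnP (size s)) => hs.
  by move=> _; apply: H; exists (Ordinal q0); rewrite hs.
move=> h; nia.
Qed.

Lemma sub_flat_cyc (q : nat) (s : seq 'I_q) :
  subseq s (flatten (nseq (size s) (enum 'I_q))).
Proof.
elim: s => [|x s IH] //=.
rewrite -cat1s; apply: cat_subseq => //.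
by rewrite sub1seq mem_enum.
Qed.

Lemma size_flat_cyc (q m : nat) :
  size (flatten (nseq m (enum 'I_q))) = m * q.
Proof.
elim: m => [|m IH] //=; by rewrite size_cat IH size_enum_ord mulSn.
Qed.

Lemma sub_nseq_count (T : eqType) (a : T) (s : seq T) :
  subseq (nseq (count_mem a s) a) s.
Proof.
elim: s => [|x s IH] //=.
case: eqP => [->|_] /=; first by rewrite eqxx.
exact: (subseq_trans IH (subseq_cons s x)).
Qed.

Lemma exists_max (P : nat -> Prop) (N : nat) : P 0 ->
  exists m, m <= N /\ P m /\ (m = N \/ ~ P m.+1).
Proof.
move=> P0; elim: N => [|N [m [hm [Pm H]]]]; first by exists 0; split; [|split; [|left]].
case: H => [HmN|H]; [subst m|]; last by exists m; split; [lia|split; [|right]].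
case: (classic (P N.+1)) => h; first by exists N.+1; split; [|split; [|left]].
by exists N; split; [lia|split; [|right]].
Qed.

Open Scope R_scope.

Lemma INR_le (a b : nat) : (a <= b)%nat -> INR a <= INR b.
Proof. by move=> h; apply le_INR; apply/leP. Qed.

Lemma targets (q n : nat) (d g : R) : (2 <= q)%nat -> 0 <= d -> 0 <= g ->
  INR q - 1 <= d * INR q + g -> (0 < n)%nat ->
  exists m : nat, forall x : n.-tuple 'I_q, exists t : 'I_q * 'I_q * 'I_n.+1,
   reachable d g n (tval x) (t.1.1 :: nseq t.2 t.1.2 ++ flatten (nseq m (enum 'I_q))).
Proof.
move=> q2 d0 g0 hdg n0.
have P0 : INR ((q-1)*0) <= g * INR n.
  by rewrite muln0 /=; apply: Rmult_le_pos => //; apply: pos_INR.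
have [m [hm [Pm Hm]]] := exists_max (fun m => INR ((q-1)*m) <= g * INR n) n.-1 P0.
exists m => x.
case: x => [[|x0 rest] /= /eqP hx]; first by move: n0; rewrite -hx.
set p := (n.-1 - m)%nat.
have hsr : size rest = n.-1 by rewrite -hx.
have [a ha] := @most_frequent q (take p rest) (ltnW q2).
set c := count_mem a (take p rest).
have hsz1 : size (take p rest) = p by rewrite size_takel // hsr; lia.
have hcp : (c <= p)%nat by have := count_size (pred1 a) (take p rest); rewrite hsz1.
have hcn : (c < n.+1)%nat by lia.
exists ((x0, a), Ordinal hcn) => /=.
exists (p - c)%nat, ((q-1)*m)%nat; split; [|split].
- case: Hm => [Hm|Hm].
    have -> : (p - c = 0)%nat by lia.
    by rewrite /=; apply: Rmult_le_pos => //; apply: pos_INR.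
  have hnr : INR n = INR p + INR m + 1.
    have -> : n = (p + m).+1 by rewrite /p; lia.
    by rewrite S_INR plus_INR.
  have h1 : INR q * INR (p - c) + INR p <= INR q * INR p.
    rewrite -!mult_INR -plus_INR; apply: INR_le.
    have hqc : (p <= q * c)%nat by move: ha; rewrite hsz1.
    clear -hqc hcp; nia.
  have h2 : g * INR n < (INR q - 1) * (INR m + 1).
    apply: Rnot_le_lt => h; apply: Hm; rewrite mult_INR minus_INR; last by apply/leP; lia.
    by change (INR 1) with 1; rewrite S_INR.
  have hq : 2 <= INR q by have := INR_le 2 q q2; rewrite /=; lra.
  have hp0 := pos_INR p; have hm0 := pos_INR m; have hpc := pos_INR (p - c).
  nra.
- exact: Pm.
- exists (x0 :: nseq c a ++ drop p rest).
  rewrite /= eqxx !size_cat size_nseq size_drop hsr size_flat_cyc.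
  apply/and4P; split.
  + rewrite -{2}(cat_take_drop p rest); apply: cat_subseq => //; exact: sub_nseq_count.
  + apply/eqP; lia.
  + apply: cat_subseq => //.
    have -> : m = size (drop p rest) by rewrite size_drop hsr; lia.
    exact: sub_flat_cyc.
  + apply/eqP; rewrite -hx /=.
    have : (m <= n.-1)%nat := hm. have : (1 < q)%nat := q2. nia.
Qed.

Lemma pigeon (X T : finType) (C : {set X}) (f : X -> T) (L : nat) :
  (forall t, (#|[set x in C | f x == t]| <= L)%nat) -> (#|C| <= #|T| * L)%nat.
Proof.
move=> H.
have -> : #|C| = \sum_(x in C) 1%nat by rewrite sum1_card.
rewrite (partition_big f predT) //=.
rewrite -sum_nat_const; apply: leq_sum => t _.
rewrite sum1_card; apply: leq_trans (H t).
by apply: subset_leq_card; apply/subsetP => x; rewrite !inE.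
Qed.

Lemma ln_le_sub1 (y : R) : 0 < y -> ln y <= y - 1.
Proof.
move=> y0; case: (Req_dec y 1) => [->|h]; first by rewrite ln_1; lra.
have hl : ln y <> 0 by apply: ln_neq_0.
have := exp_ineq1 _ hl; rewrite exp_ln //; lra.
Qed.

Lemma ln_0' : ln 0 = 0.
Proof. unfold ln; destruct (Rlt_dec 0 0); [exfalso; exact (Rlt_irrefl 0 r)|reflexivity]. Qed.

Lemma ln_le' (x y : R) : 0 < x -> x <= y -> ln x <= ln y.
Proof.
move=> x0 [h|->]; last by lra.
by left; apply: ln_increasing.
Qed.

From Stdlib Require Import ClassicalEpsilon.
Close Scope R_scope.

Theorem proposition1 (q : nat) (d g : R) :
  2 <= q ->
  (0 <= d)%R -> (0 <= g)%R ->
  (d / (1 - 1 / INR q) + g / (INR q - 1) >= 1)%R ->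
  ~ (exists (n : nat -> nat) (C : forall i : nat, code q (n i)) (L : nat -> nat),
       (* block lengths tend to infinity *)
       (forall N : nat, exists i0 : nat, forall i : nat, i0 <= i -> N <= n i) /\
       (* rate bounded away from zero *)
       (exists r : R, (0 < r)%R /\ forall i : nat, (r <= rate (C i))%R) /\
       (* list size 2^{o(n)} *)
       (forall eps : R, (0 < eps)%R ->
          exists i0 : nat, forall i : nat, i0 <= i ->
            (INR (L i) <= Rpower 2 (eps * INR (n i)))%R) /\
       (* list decodability from dn deletions and gn insertions *)
       (forall i : nat, list_decodable (C i) (L i) d g)).
Proof.
move=> q2 d0 g0 H [n [C [L [Hn [[r [r0 Hr]] [HL HD]]]]]].
Open Scope R_scope.
have hq : 2 <= INR q by have := INR_le 2 q q2; rewrite /=; lra.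
have hdg : INR q - 1 <= d * INR q + g.
  have e1 : d / (1 - 1/INR q) + g / (INR q - 1) = (d * INR q + g)/(INR q - 1).
    by field; lra.
  rewrite e1 in H; apply Rge_le in H.
  set u := (d * INR q + g)/(INR q - 1) in H.
  have e2 : d * INR q + g = u * (INR q - 1) by rewrite /u; field; lra.
  rewrite e2; nra.
set lq := ln (INR q).
have lq0 : 0 < lq by rewrite /lq -ln_1; apply: ln_increasing; lra.
set A := r * lq.
have A0 : 0 < A by rewrite /A; nra.
have l20 : 0 < ln 2 by rewrite -ln_1; apply: ln_increasing; lra.
set eps := A / (4 * ln 2).
have eps0 : 0 < eps by rewrite /eps; apply: Rdiv_lt_0_compat; lra.
have [i1 Hi1] := HL eps eps0.
set K := 4 / A.
have K0 : 0 < K by rewrite /K; apply: Rdiv_lt_0_compat; lra.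
set B := 2 * lq + ln K + A / 4 - 1.
have hB : 0 < A / (2 * (Rabs B + 1)).
  apply: Rdiv_lt_0_compat => //; have := Rabs_pos B; lra.
have [N [HN N0]] := archimed_cor1 _ hB.
have [i0 Hi0] := Hn N.
set i := maxn i0 i1.
have hi0 : (i0 <= i)%nat by rewrite /i leq_maxl.
have hi1 : (i1 <= i)%nat by rewrite /i leq_maxr.
have HNn := Hi0 i hi0.
set nn := n i in HNn.
have nn0 : (0 < nn)%nat by move/ltP: N0 => N0; apply: leq_trans HNn.
have [m Hm] := targets q nn d g q2 d0 g0 hdg nn0.
set f := fun x : nn.-tuple 'I_q =>
  proj1_sig (constructive_indefinite_description _ (Hm x)).
have hcard : (#|C i| <= q * q * nn.+1 * L i)%nat.
  have := @pigeon _ _ (C i) f (L i).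
  rewrite !card_prod !card_ord; apply => t.
  apply: (HD i (t.1.1 :: nseq t.2 t.1.2 ++ flatten (nseq m (enum 'I_q)))).
    by apply/subsetP => x; rewrite inE => /andP[].
  move=> x; rewrite inE => /andP[_ /eqP <-].
  exact: (proj2_sig (constructive_indefinite_description _ (Hm x))).
have hcardR : INR #|C i| <= INR q * INR q * (INR nn + 1) * INR (L i).
  by rewrite -S_INR -!mult_INR; apply: INR_le.
have hnnR : 1 <= INR nn by have := INR_le 1 nn nn0; rewrite /=.
have hNn : INR N <= INR nn by apply: INR_le.
have hlnC : A * INR nn <= ln (INR #|C i|).
  have := Hr i; rewrite /rate -/nn -/lq => hr.
  have := Rmult_le_compat_r (lq * INR nn) _ _ ltac:(nra) hr.
  have -> : ln (INR #|C i|) / lq / INR nn * (lq * INR nn) = ln (INR #|C i|).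
    by field; lra.
  by rewrite /A -Rmult_assoc.
have hC0 : 0 < INR #|C i|.
  case: (posnP #|C i|) => hc; last by apply: lt_0_INR; apply/ltP.
  by move: hlnC; rewrite hc /= ln_0'; nra.
have hL0 : 0 < INR (L i).
  case: (posnP (L i)) => hL; last by apply: lt_0_INR; apply/ltP.
  move: hcard; rewrite hL muln0 leqn0 => /eqP hc.
  by move: hC0; rewrite hc /=; lra.
have hlnL : ln (INR (L i)) <= eps * INR nn * ln 2.
  have := ln_le' _ _ hL0 (Hi1 i hi1); rewrite /Rpower ln_exp -/nn; lra.
have hlnn : ln (INR nn + 1) <= ln K + (INR nn + 1) / K - 1.
  have -> : INR nn + 1 = K * ((INR nn + 1) / K) by field; lra.
  rewrite ln_mult //; last by apply: Rdiv_lt_0_compat; lra.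
  have := ln_le_sub1 ((INR nn + 1) / K) ltac:(apply: Rdiv_lt_0_compat; lra).
  have -> : K * ((INR nn + 1) / K) / K = (INR nn + 1) / K by field; lra.
  lra.
have hprod : ln (INR #|C i|) <= 2 * lq + ln (INR nn + 1) + ln (INR (L i)).
  have := ln_le' _ _ hC0 hcardR.
  rewrite !ln_mult; try nra.
  rewrite -/lq; lra.
have e3 : eps * INR nn * ln 2 = A * INR nn / 4 by rewrite /eps; field; lra.
have e4 : (INR nn + 1) / K = A * INR nn / 4 + A / 4 by rewrite /K; field; lra.
have hfin : A * INR nn / 2 <= B by rewrite /B; lra.
have hN : 1 < INR N * (A / (2 * (Rabs B + 1))).
  have hN0 : 0 < INR N by apply: lt_0_INR.
  have := Rmult_lt_compat_l (INR N) _ _ hN0 HN.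
  rewrite Rinv_r; lra.
have := Rle_abs B.
have : INR N * (A / (2 * (Rabs B + 1))) * (2 * (Rabs B + 1)) = INR N * A.
  by field; have := Rabs_pos B; lra.
have := Rabs_pos B.
nra.
Qed.
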